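(* Let $p$ be an odd prime. If $n>m$ and $n-m$ is divisible by $2p-2$, then $$\frac{\Phi_n}{\Phi_m}\equiv\Phi_{n-m}\pmod{p^{1+\nu_p(n-m)}},$$ i.e. $\Phi_n/\Phi_m-\Phi_{n-m}\in p^{1+\nu_p(n-m)}A$, where $\nu_p$ denotes the $p$-adic valuation.
   Context: $A$ is the ring of degree zero stable operations in $p$-local complex $K$-theory. Fix $q$ primitive mod $p^2$, $\Psi^q\in A$ the Adams operation, $q_i=q^{(-1)^i\lfloor i/2\rfloor}$ for $i\ge1$, $\Theta_n(X)=\prod_{i=1}^n(X-q_i)$, and $\Phi_n=\Theta_n(\Psi^q)\in A$. For $n>m$, $\Theta_m(X)$ divides $\Theta_n(X)$, and $\Phi_n/\Phi_m$ denotes the value at $\Psi^q$ of the polynomial $\Theta_n(X)/\Theta_m(X)$. *)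

(* Defs.v *)
From HB Require Import structures.
From mathcomp Require Import all_boot all_order all_algebra.
Set Implicit Arguments. Unset Strict Implicit. Unset Printing Implicit Defensive.
Import Order.TTheory GRing.Theory Num.Theory.
Local Open Scope ring_scope.

Definition Zloc (p : nat) (r : rat) : Prop := ~~ ((p%:Z) %| denq r)%Z.

(* Laurent polynomials over Q: (g, N) represents w^{-N} g(w). *)
Definition laur := ({poly rat} * nat)%type.
Definition leval (f : laur) (x : rat) : rat := f.1.[x] / x ^+ f.2.

(* p-local K_0(K) (Adams--Clarke): Laurent polynomials f with f(k) in Z_(p)
   for every integer k prime to p. *)
Definition K0K (p : nat) (f : laur) : Prop :=
  forall k : int, ~~ ((p%:Z) %| k)%Z -> Zloc p (leval f k%:~R).

(* The ring A of degree-zero stable operations in p-local K-theory, realized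
   as the dual Hom_{Z_(p)}(K_0(K)_(p), Z_(p)); such a map extends uniquely to a
   Q-linear functional on Q[w,w^{-1}], which is what we record. *)
Definition inA (p : nat) (phi : laur -> rat) : Prop :=
  [/\ (forall g N, phi (g, N) = phi ('X * g, N.+1)),
      (forall g1 g2 N, phi (g1 + g2, N) = phi (g1, N) + phi (g2, N)),
      (forall (c : rat) g N, phi (c *: g, N) = c * phi (g, N)) &
      (forall f, K0K p f -> Zloc p (phi f))].

(* The operation P(Psi^q) for P in Q[X]: Psi^(q^j) pairs f with f(q^j). *)
Definition opPoly (q : int) (P : {poly rat}) (f : laur) : rat :=
  \sum_(j < size P) P`_j * leval f ((q%:~R : rat) ^+ j).

Definition qi (q : int) (i : nat) : rat :=
  if odd i then (q%:~R : rat) ^- i./2 else (q%:~R : rat) ^+ i./2.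

Definition Theta (q : int) (n : nat) : {poly rat} :=
  \prod_(1 <= i < n.+1) ('X - (qi q i)%:P).

Definition primitive_mod (q : int) (N : nat) : Prop :=
  coprimez q N /\
  (forall e : nat, (q ^+ e == 1 %[mod N%:Z])%Z = (totient N %| e)%N).

(* Main.v *)
Require Import Defs.
From HB Require Import structures.
From mathcomp Require Import all_boot all_order all_algebra.
From mathcomp Require Import ring.
From mathcomp Require cyclic.
Import Order.TTheory GRing.Theory Num.Theory.
Set Implicit Arguments. Unset Strict Implicit. Unset Printing Implicit Defensive.
Local Open Scope ring_scope.


Section Loc.
Variable p : nat.
Hypothesis pP : prime p.

Definition loc (x : rat) := exists a b : int, ~~ (p%:Z %| b)%Z /\ x = a%:~R / b%:~R.

Lemma ndvd_neq0 (b : int) : ~~ (p%:Z %| b)%Z -> b != 0.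
Proof. by apply: contra => /eqP ->; rewrite dvdz0. Qed.

Lemma ndvdM (a b : int) : ~~ (p%:Z %| a)%Z -> ~~ (p%:Z %| b)%Z -> ~~ (p%:Z %| a * b)%Z.
Proof. by rewrite !dvdzE abszM Euclid_dvdM // => /negbTE -> /negbTE ->. Qed.

Lemma ndvd1 : ~~ (p%:Z %| 1)%Z.
Proof. rewrite dvdzE /= dvdn1; apply/negP => /eqP h; by move: pP; rewrite h. Qed.

Lemma loc_int (a : int) : loc a%:~R.
Proof. exists a, 1; split; first exact: ndvd1. by rewrite divr1. Qed.

Lemma loc_nat (a : nat) : loc a%:R.
Proof. by have := loc_int a. Qed.

Lemma loc0 : loc 0. Proof. exact: (loc_int 0). Qed.
Lemma loc1 : loc 1. Proof. exact: (loc_int 1). Qed.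

Lemma loc_inv (b : int) : ~~ (p%:Z %| b)%Z -> loc (b%:~R)^-1.
Proof. move=> hb; exists 1, b; split => //; by rewrite div1r. Qed.

Lemma loc_add x y : loc x -> loc y -> loc (x + y).
Proof.
move=> [a1 [b1 [h1 ->]]] [a2 [b2 [h2 ->]]].
exists (a1 * b2 + a2 * b1), (b1 * b2); split; first exact: ndvdM.
have n1 : (b1%:~R : rat) != 0 by rewrite intr_eq0 ndvd_neq0.
have n2 : (b2%:~R : rat) != 0 by rewrite intr_eq0 ndvd_neq0.
rewrite rmorphD !rmorphM /=. field. by rewrite n1 n2.
Qed.

Lemma loc_mul x y : loc x -> loc y -> loc (x * y).
Proof.
move=> [a1 [b1 [h1 ->]]] [a2 [b2 [h2 ->]]].
exists (a1 * a2), (b1 * b2); split; first exact: ndvdM.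
rewrite !rmorphM /= invfM; ring.
Qed.

Lemma loc_opp x : loc x -> loc (- x).
Proof. move=> [a [b [h ->]]]; exists (- a), b; split => //; by rewrite rmorphN mulNr. Qed.

Lemma loc_sub x y : loc x -> loc y -> loc (x - y).
Proof. by move=> hx hy; apply: loc_add => //; apply: loc_opp. Qed.

Lemma loc_sum (I : Type) (r : seq I) (P : pred I) (F : I -> rat) :
  (forall i, P i -> loc (F i)) -> loc (\sum_(i <- r | P i) F i).
Proof. move=> h; apply: big_ind => //; [exact: loc0 | exact: loc_add]. Qed.

Lemma Zloc_loc x : Zloc p x -> loc x.
Proof. move=> h; exists (numq x), (denq x); split => //; by rewrite divq_num_den. Qed.

Lemma loc_Zloc x : loc x -> Zloc p x.
Proof.
move=> [a [b [hb hx]]]; rewrite /Zloc.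
have nb : (b%:~R : rat) != 0 by rewrite intr_eq0 ndvd_neq0.
apply: contra hb => hd.
have e : numq x * b = a * denq x.
  apply: (@intr_inj rat); rewrite !rmorphM /= numqE hx.
  field. done.
have : (denq x %| numq x * b)%Z by rewrite e dvdz_mull.
rewrite Gauss_dvdzr; first by apply: dvdz_trans.
by rewrite coprimezE coprime_sym coprime_num_den.
Qed.

Variable e : nat.
Definition dv (x : rat) := exists y, loc y /\ x = (p ^ e)%:R * y.

Lemma dv0 : dv 0. Proof. exists 0; split; [exact: loc0 | by rewrite mulr0]. Qed.
Lemma dv_add x y : dv x -> dv y -> dv (x + y).
Proof. move=> [a [ha ->]] [b [hb ->]]; exists (a + b); split; [exact: loc_add | by rewrite mulrDr]. Qed.
Lemma dv_opp x : dv x -> dv (- x).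
Proof. move=> [a [ha ->]]; exists (- a); split; [exact: loc_opp | by rewrite mulrN]. Qed.
Lemma dv_sub x y : dv x -> dv y -> dv (x - y).
Proof. by move=> hx hy; apply: dv_add => //; apply: dv_opp. Qed.
Lemma dv_mul x y : dv x -> loc y -> dv (x * y).
Proof. move=> [a [ha ->]] hy; exists (a * y); split; [exact: loc_mul | by rewrite mulrA]. Qed.
Lemma dv_sum (I : Type) (r : seq I) (P : pred I) (F : I -> rat) :
  (forall i, P i -> dv (F i)) -> dv (\sum_(i <- r | P i) F i).
Proof. move=> h; apply: big_ind => //; [exact: dv0 | exact: dv_add]. Qed.


Definition locpoly (P : {poly rat}) := forall i, loc P`_i.
Definition dvpoly (P : {poly rat}) := forall i, dv P`_i.
Definition cong P Q := dvpoly (P - Q).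

Lemma locpolyM P Q : locpoly P -> locpoly Q -> locpoly (P * Q).
Proof. move=> hP hQ i; rewrite coefM; apply: loc_sum => j _; exact: loc_mul. Qed.

Lemma dvpolyM P Q : dvpoly P -> locpoly Q -> dvpoly (P * Q).
Proof. move=> hP hQ i; rewrite coefM; apply: dv_sum => j _; exact: dv_mul. Qed.

Lemma locpoly_prod (I : Type) (r : seq I) (Pr : pred I) (F : I -> {poly rat}) :
  (forall i, Pr i -> locpoly (F i)) -> locpoly (\prod_(i <- r | Pr i) F i).
Proof.
move=> h; apply: big_ind => //; last exact: locpolyM.
move=> i; rewrite coefC; case: (i == 0)%N; [exact: loc1 | exact: loc0].
Qed.

Lemma locpolyXC c : loc c -> locpoly ('X - c%:P).
Proof.
move=> hc i; rewrite coefB coefX coefC; apply: loc_sub; first exact: loc_nat.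
case: (i == 0)%N => //; exact: loc0.
Qed.

Lemma cong_refl P : cong P P.
Proof. by move=> i; rewrite subrr coef0; exact: dv0. Qed.

Lemma cong_sym P Q : cong P Q -> cong Q P.
Proof. by move=> h i; rewrite -opprB coefN; apply: dv_opp. Qed.

Lemma cong_trans P Q R : cong P Q -> cong Q R -> cong P R.
Proof.
move=> h1 h2 i; have -> : P - R = (P - Q) + (Q - R) by ring.
rewrite coefD; exact: dv_add.
Qed.

Lemma congMr P Q C : cong P Q -> locpoly C -> cong (P * C) (Q * C).
Proof. by move=> h hC; rewrite /cong -mulrBl; apply: dvpolyM. Qed.

Lemma congM P1 Q1 P2 Q2 : cong P1 Q1 -> cong P2 Q2 -> locpoly Q1 -> locpoly P2 ->
  cong (P1 * P2) (Q1 * Q2).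
Proof.
move=> h1 h2 l1 l2; apply: cong_trans (congMr h1 l2) _.
rewrite ![Q1 * _]mulrC; exact: congMr.
Qed.

Lemma rotation (t : nat) (F : nat -> {poly rat}) :
  (forall x, locpoly (F x)) -> (forall x, cong (F (x + t)%N) (F x)) ->
  forall c, cong (\prod_(k < t) F (c + k)%N) (\prod_(k < t) F k).
Proof.
move=> hl; case: t => [|t] hp c.
  rewrite !big_ord0; exact: cong_refl.
elim: c => [|c IH].
  under eq_bigr do rewrite add0n. exact: cong_refl.
apply: (cong_trans _ IH).
rewrite big_ord_recr big_ord_recl /= addn0.
have -> : (c.+1 + t = c + t.+1)%N by rewrite addSnnS.
rewrite mulrC.
have -> : \prod_(i < t) F (c.+1 + i)%N = \prod_(i < t) F (c + bump 0 i)%N.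
  by apply: eq_bigr => i _; rewrite addSnnS.
apply: congM; [exact: hp | exact: cong_refl | exact: hl | ].
apply: locpoly_prod => i _; exact: hl.
Qed.

End Loc.


Lemma dvdz_sumr (d : int) (I : Type) (r : seq I) (P : pred I) (F : I -> int) :
  (forall i, P i -> (d %| F i)%Z) -> (d %| \sum_(i <- r | P i) F i)%Z.
Proof. by move=> h; apply: rpred_sum. Qed.

Lemma dvdXsub1 (y : int) (u : nat) : (y - 1 %| y ^+ u - 1)%Z.
Proof. by have := subrXX y 1 u; rewrite expr1n => ->; apply: dvdz_mulr. Qed.

Lemma lift_step (p : nat) (k : nat) (y : int) :
  ((p ^ k.+1)%N%:Z %| y - 1)%Z -> ((p ^ k.+2)%N%:Z %| y ^+ p - 1)%Z.
Proof.
move=> h.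
have hp : (p%:Z %| y - 1)%Z.
  apply: dvdz_trans h; rewrite dvdzE /=; exact: dvdn_exp.
have := subrXX y 1 p; rewrite expr1n => ->; rewrite expnSr PoszM; apply: dvdz_mul => //.
under eq_bigr do rewrite expr1n mulr1.
have -> : \sum_(i < p) y ^+ (p.-1 - i) = \sum_(i < p) (y ^+ (p.-1 - i) - 1) + p%:Z.
  by rewrite sumrB sumr_const card_ord natz subrK.
apply: rpredD => //; apply: dvdz_sumr => i _.
exact: dvdz_trans hp (dvdXsub1 _ _).
Qed.

Lemma lift_all (p : nat) (x : int) :
  (p%:Z %| x - 1)%Z -> forall k, ((p ^ k.+1)%N%:Z %| x ^+ (p ^ k) - 1)%Z.
Proof.
move=> h; elim=> [|k IH]; first by rewrite expn1 expr1.
by rewrite expnSr exprM; apply: lift_step.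
Qed.

Lemma PoszX (a n : nat) : (a ^ n)%N%:Z = a%:Z ^+ n.
Proof. by rewrite -natz natrX natz. Qed.

Lemma fermat_int (p : nat) (q : int) : prime p -> odd p -> ~~ (p %| `|q|)%N ->
  (p%:Z %| q ^+ p.-1 - 1)%Z.
Proof.
move=> pP po hq.
have hc : coprime `|q| p by rewrite coprime_sym prime_coprime.
have E := cyclic.Euler_exp_totient hc; rewrite totient_prime // in E.
have a0 : (0 < `|q| ^ p.-1)%N.
  rewrite expn_gt0; apply/orP; left; rewrite lt0n; apply: contra hq => /eqP ->.
  exact: dvdn0.
have hd : (p %| `|q| ^ p.-1 - 1)%N by rewrite -eqn_mod_dvd // E.
have -> : q ^+ p.-1 = (`|q| ^ p.-1)%N%:Z.
  have ev : p.-1 = (p.-1./2).*2.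
    by rewrite -[in LHS](odd_double_half p.-1) -subn1 oddB ?prime_gt0 // po.
  rewrite ev -muln2 PoszX abszE mulnC !exprM real_normK ?num_real //.
by rewrite subzn // dvdzE.
Qed.

Lemma qt_dvd (p : nat) (q : int) (t k : nat) : prime p -> odd p -> ~~ (p %| `|q|)%N ->
  (p.-1 * p ^ k %| t)%N -> ((p ^ k.+1)%N%:Z %| q ^+ t - 1)%Z.
Proof.
move=> pP po hq /dvdnP [u ->].
have h := lift_all (fermat_int pP po hq) k.
rewrite mulnC !exprM; apply: dvdz_trans h _; exact: dvdXsub1.
Qed.


Section Th.
Variable q : int.
Local Notation qr := (q%:~R : rat).
Definition Fp (x : nat) : {poly rat} := 'X - (qr ^+ x.+1)%:P.
Definition Gn (x : nat) : {poly rat} := 'X - (qr ^- x)%:P.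
Definition Nn b := \prod_(k < b) Gn k.
Definition Pp a := \prod_(k < a) Fp k.

Lemma ThetaS N : Theta q N.+1 = Theta q N * ('X - (qi q N.+1)%:P).
Proof. by rewrite /Theta big_nat_recr. Qed.

Lemma ThetaE j : Theta q (j.*2) = Nn j * Pp j /\ Theta q (j.*2.+1) = Nn j.+1 * Pp j.
Proof.
have odd_step : forall j, Theta q (j.*2) = Nn j * Pp j -> Theta q (j.*2.+1) = Nn j.+1 * Pp j.
  move=> i h; rewrite ThetaS h /Nn big_ord_recr /= /qi /= odd_double /= uphalf_double.
  rewrite /Gn; ring.
elim: j => [|j [_ IH]].
  have h0 : Theta q 0 = Nn 0 * Pp 0 by rewrite /Theta /Nn /Pp big_geq // !big_ord0 mulr1.
  by split => //; apply: odd_step.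
have h : Theta q (j.+1.*2) = Nn j.+1 * Pp j.+1.
  rewrite doubleS ThetaS IH /Pp big_ord_recr /= /qi /= odd_double /= half_double.
  rewrite /Fp; ring.
by split => //; apply: odd_step.
Qed.

Lemma Nn_split a b : Nn (a + b) = Nn a * \prod_(k < b) Gn (a + k).
Proof. by rewrite /Nn big_split_ord. Qed.
Lemma Pp_split a b : Pp (a + b) = Pp a * \prod_(k < b) Fp (a + k).
Proof. by rewrite /Pp big_split_ord. Qed.

Lemma Theta_decomp m t : exists c1 c2,
  Theta q (m + t.*2) = Theta q m * (\prod_(k < t) Gn (c1 + k) * \prod_(k < t) Fp (c2 + k)).
Proof.
rewrite -(odd_double_half m); set s := m./2; case: (odd m) => /=.
  exists s.+1, s.
  have -> : (1 + s.*2 + t.*2 = (s + t).*2.+1)%N by rewrite doubleD add1n addSn.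
  rewrite add1n (proj2 (ThetaE s)) (proj2 (ThetaE (s + t))) -addSn Nn_split Pp_split; ring.
exists s, s.
have -> : (0 + s.*2 + t.*2 = (s + t).*2)%N by rewrite doubleD.
rewrite add0n (proj1 (ThetaE s)) (proj1 (ThetaE (s + t))) Nn_split Pp_split; ring.
Qed.

Lemma Theta_even t : Theta q t.*2 = \prod_(k < t) Gn (0 + k) * \prod_(k < t) Fp (0 + k).
Proof.
rewrite (proj1 (ThetaE t)) /Nn /Pp; congr (_ * _); by apply: eq_bigr => i _; rewrite add0n.
Qed.

End Th.


Section Per.
Variables (p : nat) (q : int) (e t : nat).
Hypotheses (pP : prime p) (hq : ~~ (p %| `|q|)%N) (Hqt : ((p ^ e)%N%:Z %| q ^+ t - 1)%Z).
Local Notation qr := (q%:~R : rat).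

Lemma ndvd_qpow j : ~~ (p%:Z %| q ^+ j)%Z.
Proof. by rewrite dvdzE abszX Euclid_dvdX // negb_and hq. Qed.

Lemma loc_qpow j : loc p (qr ^+ j).
Proof. by have := loc_int pP (q ^+ j); rewrite rmorphXn. Qed.

Lemma loc_qinv j : loc p (qr ^- j).
Proof. by have := loc_inv (ndvd_qpow j); rewrite rmorphXn. Qed.

Lemma qr_neq0 : qr != 0.
Proof. rewrite intr_eq0; apply: contra hq => /eqP ->; exact: dvdn0. Qed.

Lemma dv_qt : dv p e (qr ^+ t - 1).
Proof.
case/dvdzP: Hqt => z hz; exists z%:~R; split; first exact: loc_int.
have -> : qr ^+ t - 1 = (q ^+ t - 1)%:~R by rewrite rmorphB rmorphXn rmorph1.
by rewrite hz rmorphM /= mulrC.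
Qed.

Lemma Fp_per x : cong p e (Fp q (x + t)) (Fp q x).
Proof.
move=> i; rewrite /Fp.
have -> : forall A B : rat, 'X - A%:P - ('X - B%:P) = (B - A)%:P by move=> A B; rewrite polyCB; ring.
rewrite coefC; case: (i == 0)%N; last exact: dv0.
have -> : qr ^+ x.+1 - qr ^+ (x + t).+1 = (qr ^+ t - 1) * (- qr ^+ x.+1).
  rewrite -addSn exprD; ring.
apply: (dv_mul pP dv_qt); apply: loc_opp; exact: loc_qpow.
Qed.

Lemma Gn_per x : cong p e (Gn q (x + t)) (Gn q x).
Proof.
move=> i; rewrite /Gn.
have -> : forall A B : rat, 'X - A%:P - ('X - B%:P) = (B - A)%:P by move=> A B; rewrite polyCB; ring.
rewrite coefC; case: (i == 0)%N; last exact: dv0.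
have -> : qr ^- x - qr ^- (x + t) = (qr ^+ t - 1) * qr ^- (x + t).
  have hx : qr ^+ x != 0 by apply: expf_neq0; exact: qr_neq0.
  have ht : qr ^+ t != 0 by apply: expf_neq0; exact: qr_neq0.
  rewrite exprD invfM; field; by rewrite hx ht.
apply: (dv_mul pP dv_qt); exact: loc_qinv.
Qed.

Lemma locpoly_Fp x : locpoly p (Fp q x).
Proof. apply: (locpolyXC pP); exact: loc_qpow. Qed.
Lemma locpoly_Gn x : locpoly p (Gn q x).
Proof. apply: (locpolyXC pP); exact: loc_qinv. Qed.

Lemma main_cong c1 c2 :
  cong p e (\prod_(k < t) Gn q (c1 + k) * \prod_(k < t) Fp q (c2 + k))
           (\prod_(k < t) Gn q (0 + k) * \prod_(k < t) Fp q (0 + k)).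
Proof.
have e1 : \prod_(k < t) Gn q (0 + k) = \prod_(k < t) Gn q k by apply: eq_bigr => i _; rewrite add0n.
have e2 : \prod_(k < t) Fp q (0 + k) = \prod_(k < t) Fp q k by apply: eq_bigr => i _; rewrite add0n.
rewrite e1 e2; apply: (congM pP).
- exact: (rotation pP locpoly_Gn Gn_per c1).
- exact: (rotation pP locpoly_Fp Fp_per c2).
- by apply: (locpoly_prod pP) => i _; exact: locpoly_Gn.
- by apply: (locpoly_prod pP) => i _; exact: locpoly_Fp.
Qed.

End Per.


Lemma leval_X (g : {poly rat}) N x : x != 0 -> leval (g, N) x = leval ('X * g, N.+1) x.
Proof.
move=> hx; rewrite /leval /= [('X * g)]mulrC hornerMX exprS.
have : x ^+ N != 0 by apply: expf_neq0.
move=> hN; field; by rewrite hx hN.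
Qed.

Unset Implicit Arguments.
Theorem lemma3p7 (p : nat) (q : int) (n m : nat) :
  prime p -> odd p -> primitive_mod q (p ^ 2) ->
  (m < n)%N -> ((2 * p - 2) %| (n - m))%N ->
  exists psi : laur -> rat,
    inA p psi /\
    forall f : laur,
      opPoly q (Theta q n %/ Theta q m - Theta q (n - m)) f
      = (p ^ (1 + logn p (n - m)))%N%:R * psi f.
Proof.
move=> pP po [hcop _] hmn hdiv.
have hq : ~~ (p %| `|q|)%N.
  apply/negP => hpq; move: hcop; rewrite coprimezE /= => hc.
  have := coprime_dvdl hpq hc; rewrite prime_coprime // => /negP; apply.
  by apply: dvdn_exp.
move: hdiv; set d := (n - m)%N => hdiv.
set nu := logn p d.
have e2p : (2 * p - 2 = p.-1 * 2)%N by rewrite mulnC -subn1 mulnBl mul1n.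
rewrite e2p in hdiv.
have h2 : (2 %| d)%N by apply: dvdn_trans hdiv; exact: dvdn_mull.
set t := d./2.
have hd : d = t.*2.
  rewrite -{1}(odd_double_half d); move: h2; rewrite dvdn2 => /negbTE ->; by rewrite add0n.
have hpt : (p.-1 * p ^ nu %| t)%N.
  rewrite Gauss_dvd; last first.
    apply: coprimeXr; by case: (p) pP => // p0 _; exact: coprimenS.
  apply/andP; split.
    by rewrite -(@dvdn_pmul2r 2) // !muln2 -hd -muln2.
  rewrite -(@Gauss_dvdl _ _ 2); first by rewrite muln2 -hd pfactor_dvdnn.
  by apply: coprimeXl; rewrite coprimen2.
have Hqt := qt_dvd pP po hq hpt.
have hn : n = (m + t.*2)%N by rewrite -hd /d subnKC // ltnW.
have [c1 [c2 hT]] := Theta_decomp q m t.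
set T := (\prod_(k < t) Gn q (c1 + k) * \prod_(k < t) Fp q (c2 + k)).
have hm0 : Theta q m != 0 by rewrite monic_neq0 // /Theta monic_prod_XsubC.
have hdivE : Theta q n %/ Theta q m = T by rewrite hn hT mulKp.
set D := Theta q n %/ Theta q m - Theta q d.
have hD : dvpoly p nu.+1 D.
  rewrite /D hdivE hd Theta_even; exact: (main_cong pP hq Hqt).
have hP : (p ^ (1 + nu))%N%:R != 0 :> rat.
  by rewrite pnatr_eq0 -lt0n expn_gt0 prime_gt0.
have qj0 : forall j, (q%:~R : rat) ^+ j != 0.
  move=> j; apply: expf_neq0; rewrite intr_eq0; apply: contra hq => /eqP ->; exact: dvdn0.
exists (fun f => opPoly q D f / (p ^ (1 + nu))%N%:R); split; last first.
  by move=> f; rewrite mulrC divfK.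
split.
- move=> g N; congr (_ / _); apply: eq_bigr => j _; congr (_ * _); exact: leval_X.
- move=> g1 g2 N; rewrite -mulrDl /opPoly -big_split; congr (_ / _).
  apply: eq_bigr => j _; by rewrite /leval /= hornerD mulrDl mulrDr.
- move=> c g N; rewrite mulrA; congr (_ / _); rewrite /opPoly mulr_sumr.
  apply: eq_bigr => j _; rewrite /leval /= hornerZ; ring.
- move=> f hf; apply: loc_Zloc; rewrite /opPoly mulr_suml.
  apply: (loc_sum pP) => j _.
  rewrite mulrAC; apply: (loc_mul pP).
    have [y [hy ->]] := hD j; by rewrite add1n mulrC mulKf // -add1n.
  apply: (Zloc_loc); have := hf (q ^+ j) (ndvd_qpow pP hq j); by rewrite rmorphXn.
Qed.
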